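(* The linear maps $\mathrm{d}^i_{0,0}:\mathcal{W}\to\mathcal{F}_0\otimes\mathcal{F}_0$ ($i=1,\dots,5$) given for $m,n\in\mathbb{Z}$ by $\mathrm{d}^1_{0,0}(L_m)=v_0\otimes v_m$, $\mathrm{d}^2_{0,0}(L_m)=m\,v_0\otimes v_m$, $\mathrm{d}^3_{0,0}(L_m)=v_m\otimes v_0$, $\mathrm{d}^4_{0,0}(L_m)=m\,v_m\otimes v_0$, and $\mathrm{d}^5_{0,0}(L_0)=v_0\otimes v_0$, $\mathrm{d}^5_{0,0}(L_1)=0$, $\mathrm{d}^5_{0,0}(L_n)=-\sum_{i=1}^{n-1}v_i\otimes v_{n-i}$ for $n\geq2$, $\mathrm{d}^5_{0,0}(L_n)=\sum_{i=n}^{0}v_i\otimes v_{n-i}$ for $n\leq-1$, are 1-cocycles that are not 1-coboundaries, and $\mathrm{d}^1_{0,0},\dots,\mathrm{d}^5_{0,0}$ are linearly independent.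
   Context: The Witt algebra $\mathcal{W}$ has basis $\{L_n\mid n\in\mathbb{Z}\}$ and bracket $[L_m,L_n]=(m-n)L_{m+n}$. $\mathcal{F}_0$ has basis $\{v_n\}$ with $L_m\cdot v_n=-n v_{m+n}$, and $\mathcal{F}_0\otimes\mathcal{F}_0$ is a $\mathcal{W}$-module via $L_m\cdot(v_i\otimes v_j)=-i\,v_{m+i}\otimes v_j-j\,v_i\otimes v_{m+j}$. A 1-cocycle is a linear map $d$ with $d([x,y])=x\cdot d(y)-y\cdot d(x)$; a 1-coboundary is a map $x\mapsto x\cdot v$ for a fixed $v$ in the module. *)

(* Defs.v *)
From mathcomp Require Import all_boot all_order all_algebra.
Set Implicit Arguments. Unset Strict Implicit. Unset Printing Implicit Defensive.
Import Order.TTheory GRing.Theory Num.Theory.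
Local Open Scope ring_scope.

(* An element of F_0 (x) F_0 over the field K is represented by its
   coefficient function: u a b = coefficient of v_a (x) v_b.
   Genuine elements of the tensor product are the finitely supported ones. *)
Definition tens (K : fieldType) := int -> int -> K.

Definition fin_supp (K : fieldType) (u : tens K) : Prop :=
  exists N : nat, forall a b : int,
    ((N%:Z < `|a|%:Z) || (N%:Z < `|b|%:Z))%R -> u a b = 0.

(* L_m . (v_i (x) v_j) = - i v_{m+i} (x) v_j - j v_i (x) v_{m+j},
   expressed on coefficients. *)
Definition act (K : fieldType) (m : int) (u : tens K) : tens K :=
  fun a b => - ((a - m)%:~R * u (a - m) b) - ((b - m)%:~R * u a (b - m)).

(* A linear map d : W -> F_0 (x) F_0 is determined by its values d m = d(L_m). *)
Definition is_map (K : fieldType) (d : int -> tens K) : Prop :=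
  forall m, fin_supp (d m).

(* 1-cocycle: d([L_m,L_n]) = L_m . d(L_n) - L_n . d(L_m), on the basis
   (equivalent to the condition on all of W by bilinearity). *)
Definition cocycle (K : fieldType) (d : int -> tens K) : Prop :=
  is_map d /\
  forall m n a b : int,
    (m - n)%:~R * d (m + n) a b = act m (d n) a b - act n (d m) a b.

Definition coboundary (K : fieldType) (d : int -> tens K) : Prop :=
  exists v : tens K, fin_supp v /\ forall m a b, d m a b = act m v a b.

Definition vt (K : fieldType) (i j : int) : tens K :=
  fun a b => ((a == i) && (b == j))%:R.

Definition d1 (K : fieldType) (m : int) : tens K := vt K 0 m.
Definition d2 (K : fieldType) (m : int) : tens K := fun a b => m%:~R * vt K 0 m a b.
Definition d3 (K : fieldType) (m : int) : tens K := vt K m 0.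
Definition d4 (K : fieldType) (m : int) : tens K := fun a b => m%:~R * vt K m 0 a b.

Definition d5 (K : fieldType) (n : int) : tens K := fun a b =>
  if n == 0 then vt K 0 0 a b
  else if n == 1 then 0
  else if (2 <= n)%R then - (((1 <= a) && (a <= n - 1) && (b == n - a))%R)%:R
  else (((n <= a) && (a <= 0) && (b == n - a))%R)%:R.

Definition dfam (K : fieldType) (i : 'I_5) : int -> tens K :=
  match val i with
  | 0 => @d1 K | 1 => @d2 K | 2 => @d3 K | 3 => @d4 K | _ => @d5 K
  end.

(* Main.v *)
Require Import Defs.
From mathcomp Require Import all_boot all_order all_algebra zify ring.
Import GRing.Theory Num.Theory.
Local Open Scope ring_scope.

Definition VT (i j a b : int) : int := if (a == i) && (b == j) then 1 else 0.
Definition D1 (m a b : int) : int := VT 0 m a b.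
Definition D2 (m a b : int) : int := m * VT 0 m a b.
Definition D3 (m a b : int) : int := VT m 0 a b.
Definition D4 (m a b : int) : int := m * VT m 0 a b.
Definition sg0 (x : int) : int := if x <= 0 then 1 else 0.
Definition D5 (n a b : int) : int := if a + b == n then sg0 a + sg0 b - 1 else 0.

Definition cocI (D : int -> int -> int -> int) := forall m n a b : int,
  (m-n) * D (m+n) a b = (-((a-m) * D n (a-m) b) - (b-m) * D n a (b-m))
     - (-((a-n) * D m (a-n) b) - (b-n) * D m a (b-n)).

Lemma vtE K i j a b : vt K i j a b = (VT i j a b)%:~R.
Proof. by rewrite /vt /VT; case: ifP. Qed.

Lemma coc_int K (d : int -> tens K) (D : int -> int -> int -> int) :
  (forall m a b, d m a b = (D m a b)%:~R) -> cocI D ->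
  forall m n a b, (m - n)%:~R * d (m + n) a b = act m (d n) a b - act n (d m) a b.
Proof.
move=> hd hD m n a b; rewrite /act !hd.
have := congr1 (fun z : int => (z%:~R : K)) (hD m n a b) => /= H.
by rewrite !(intrD, intrM, intrN) in H *.
Qed.

Lemma cocD1 : cocI D1.
Proof. move=> m n a b; rewrite /D1 /VT; repeat case: ifP; lia. Qed.
Lemma cocD3 : cocI D3.
Proof. move=> m n a b; rewrite /D3 /VT; repeat case: ifP; lia. Qed.
Lemma cocD2 : cocI D2.
Proof. move=> m n a b; rewrite /D2 /VT; repeat case: ifP; nia. Qed.
Lemma cocD4 : cocI D4.
Proof. move=> m n a b; rewrite /D4 /VT; repeat case: ifP; nia. Qed.
Lemma cocD5 : cocI D5.
Proof.
move=> m n a b; rewrite /D5.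
case h: (a + b == m + n).
  have -> : (a - m + b == n) = true by lia.
  have -> : (a + (b - m) == n) = true by lia.
  have -> : (a - n + b == m) = true by lia.
  have -> : (a + (b - n) == m) = true by lia.
  rewrite /sg0; repeat case: ifP; lia.
have -> : (a - m + b == n) = false by lia.
have -> : (a + (b - m) == n) = false by lia.
have -> : (a - n + b == m) = false by lia.
have -> : (a + (b - n) == m) = false by lia.
lia.
Qed.


Lemma d5E K n a b : d5 K n a b = (D5 n a b)%:~R.
Proof.
rewrite /d5 /vt /D5 /sg0.
repeat case: ifP => ?; try (exfalso; lia); rewrite ?addr0 ?subrr ?subr0 //;
repeat match goal with |- context [nat_of_bool ?x] => case E: x => /=; try (exfalso; lia) end;
rewrite ?oppr0 //=; try (exfalso; lia).
Qed.

Definition fsI (D : int -> int -> int -> int) := forall m, exists N : nat, forall a b : int,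
    ((N%:Z < `|a|%:Z) || (N%:Z < `|b|%:Z))%R -> D m a b = 0.

Lemma fs_int K (d : int -> tens K) (D : int -> int -> int -> int) :
  (forall m a b, d m a b = (D m a b)%:~R) -> fsI D -> is_map d.
Proof.
move=> hd hD m; have [N hN] := hD m; exists N => a b h.
by rewrite hd hN.
Qed.

Lemma fsVT i j: exists N : nat, forall a b : int,
    ((N%:Z < `|a|%:Z) || (N%:Z < `|b|%:Z))%R -> VT i j a b = 0.
Proof. exists (maxn `|i| `|j|)%N => a b h; rewrite /VT; case: ifP => //; lia. Qed.

Lemma fsD5 : fsI D5.
Proof. move=> n; exists `|n|%N => a b h; rewrite /D5 /sg0; repeat case: ifP; lia. Qed.

Lemma d1E K m a b : d1 K m a b = (D1 m a b)%:~R. Proof. exact: vtE. Qed.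
Lemma d3E K m a b : d3 K m a b = (D3 m a b)%:~R. Proof. exact: vtE. Qed.
Lemma d2E K m a b : d2 K m a b = (D2 m a b)%:~R. Proof. by rewrite /d2 vtE /D2 intrM. Qed.
Lemma d4E K m a b : d4 K m a b = (D4 m a b)%:~R. Proof. by rewrite /d4 vtE /D4 intrM. Qed.

Lemma fsD1 : fsI D1. Proof. move=> m; exact: fsVT. Qed.
Lemma fsD3 : fsI D3. Proof. move=> m; exact: fsVT. Qed.
Lemma fsD2 : fsI D2.
Proof. move=> m; have [N hN] := fsVT 0 m; exists N => a b h; by rewrite /D2 hN // mulr0. Qed.
Lemma fsD4 : fsI D4.
Proof. move=> m; have [N hN] := fsVT m 0; exists N => a b h; by rewrite /D4 hN // mulr0. Qed.

Lemma nocob0 K (d : int -> tens K) : d 0 0 0 = 1 -> ~ coboundary d.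
Proof.
move=> h [v [_ hv]]; have := hv 0 0 0; rewrite h /act !subrr !mul0r !oppr0 ?subr0 ?subrr.
by rewrite addr0 => /eqP; rewrite oner_eq0.
Qed.

Theorem propositionP3p0 (K : fieldType) (hK : [pchar K] =i pred0) :
  (forall i : 'I_5, cocycle (dfam K i) /\ ~ coboundary (dfam K i)) /\
  (forall c : 'I_5 -> K,
     (forall (m a b : int), \sum_(i < 5) c i * dfam K i m a b = 0) ->
     forall i, c i = 0).
Proof.
have hc := (pcharf0P K).1 hK.
split.
  case=> [[|[|[|[|[|i]]]]] Hi] //; rewrite /dfam /=.
  - split; first by split; [exact: fs_int (@d1E K) fsD1 | exact: coc_int (@d1E K) cocD1].
    by apply: nocob0; rewrite /d1 /vt.
  - split; first by split; [exact: fs_int (@d2E K) fsD2 | exact: coc_int (@d2E K) cocD2].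
    move=> [v [[N hN] hv]]; pose m : int := Posz N.+1.
    have := hv m 0 m; rewrite /d2 /vt /act !eqxx /= subrr mul0r subr0 sub0r intrN mulNr opprK.
    rewrite hN; last by apply/orP; left; rewrite /m; lia.
    rewrite mulr0 mulr1 => /eqP.
    by change (((N.+1)%:R == 0 :> K) -> False); rewrite hc.
  - split; first by split; [exact: fs_int (@d3E K) fsD3 | exact: coc_int (@d3E K) cocD3].
    by apply: nocob0; rewrite /d3 /vt.
  - split; first by split; [exact: fs_int (@d4E K) fsD4 | exact: coc_int (@d4E K) cocD4].
    move=> [v [[N hN] hv]]; pose m : int := Posz N.+1.
    have := hv m m 0; rewrite /d4 /vt /act !eqxx /= subrr mul0r oppr0 sub0r add0r intrN mulNr opprK.
    rewrite hN; last by apply/orP; right; rewrite /m; lia.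
    rewrite mulr0 mulr1 => /eqP.
    by change (((N.+1)%:R == 0 :> K) -> False); rewrite hc.
  - split; first by split; [exact: fs_int (@d5E K) fsD5 | exact: coc_int (@d5E K) cocD5].
    by apply: nocob0; rewrite /d5 /vt.
move=> c H.
have h000 := H 0 0 0.
have h101 := H 1 0 1.
have h110 := H 1 1 0.
have h202 := H 2 0 2.
have h220 := H 2 2 0.
rewrite !big_ord_recl big_ord0 /dfam /= in h000 h101 h110 h202 h220.
rewrite !(d1E, d2E, d3E, d4E, d5E) ?big_ord0 /= in h000 h101 h110 h202 h220.
rewrite /D1 /D2 /D3 /D4 /D5 /VT /sg0 /= in h000 h101 h110 h202 h220.
rewrite ?(mul1r, mulr1, mulr0, mul0r, addr0, add0r, subrr, addrK) in h000 h101 h110 h202 h220.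
set x0 := c ord0 in h000 h101 h110 h202 h220.
set x1 := c (lift ord0 ord0) in h000 h101 h110 h202 h220.
set x2 := c (lift ord0 (lift ord0 ord0)) in h000 h101 h110 h202 h220.
set x3 := c (lift ord0 (lift ord0 (lift ord0 ord0))) in h000 h101 h110 h202 h220.
set x4 := c (lift ord0 (lift ord0 (lift ord0 (lift ord0 ord0)))) in h000 h101 h110 h202 h220.
have e1 : x1 = 0.
  have -> : x1 = (x0 + x1 * 2%:~R) - (x0 + x1) by ring.
  by rewrite h202 h101 subrr.
have e0 : x0 = 0 by move: h101; rewrite e1 addr0.
have e3 : x3 = 0.
  have -> : x3 = (x2 + x3 * 2%:~R) - (x2 + x3) by ring.
  by rewrite h220 h110 subrr.
have e2 : x2 = 0 by move: h110; rewrite e3 addr0.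
have e4 : x4 = 0 by move: h000; rewrite e0 e2 !add0r.
case=> [[|[|[|[|[|i]]]]] Hi] //.
- by rewrite -e0 /x0; congr (c _); apply: val_inj.
- by rewrite -e1 /x1; congr (c _); apply: val_inj.
- by rewrite -e2 /x2; congr (c _); apply: val_inj.
- by rewrite -e3 /x3; congr (c _); apply: val_inj.
- by rewrite -e4 /x4; congr (c _); apply: val_inj.
Qed.
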